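(* Let $s,t$ be real numbers. For every integer $n\geq 3$, $$\det W_n = (-1)^{n-1}\Big( s^{n-1}t + \Big\lfloor \frac{n}{2}\Big\rfloor\Big\lfloor\frac{n-1}{2}\Big\rfloor s^{n-3}t^3\Big).$$
   Context: All matrices below are $n\times n$ upper Hessenberg with subdiagonal entries $a_{i+1,i}=s$ and $a_{ij}=0$ for $i>j+1$; only the entries $a_{ij}$ with $i\le j$ are specified. For $n = 2k+1$ ($k\ge 1$), $W_n$ has: $a_{1j}=t$ for $1\le j\le k$, $a_{1j}=0$ for $k+1\le j\le 2k$, $a_{1n}=t$; for $2\le i\le k+1$: $a_{ij}=0$ for $i\le j\le k$, $a_{ij}=t$ for $k+1\le j\le 2k$, $a_{in}=0$; for $k+2\le i\le n$: $a_{ij}=0$ for $i\le j\le 2k$, $a_{in}=t$. For $n=2k+2$ ($k\ge 0$), $W_n$ has: $a_{1j}=t$ for $1\le j\le k$, $a_{1j}=0$ for $k+1\le j\le 2k+1$, $a_{1n}=t$; for $2\le i\le k+1$: $a_{ij}=0$ for $i\le j\le k$, $a_{ij}=t$ for $k+1\le j\le 2k+1$, $a_{in}=0$; for $k+2\le i\le n$: $a_{ij}=0$ for $i\le j\le 2k+1$, $a_{in}=t$. *)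

(* Defs.v *)
From HB Require Import structures.
From mathcomp Require Import all_boot all_order all_algebra.
From mathcomp Require Import reals.
Set Implicit Arguments. Unset Strict Implicit. Unset Printing Implicit Defensive.
Import Order.TTheory GRing.Theory Num.Theory.
Local Open Scope ring_scope.

(* Entry (i', j') of W_n, with 1-based indices i' j' in 1..n.
   kk = floor((n-1)/2): for n = 2k+1 this is k, for n = 2k+2 it is k. *)
Definition W_entry (R : nzRingType) (s t : R) (n i' j' : nat) : R :=
  let kk := (n.-1)./2 in
  if i' == j'.+1 then s
  else if (j' < i')%N then 0
  else if i' == 1%N then (if (j' <= kk)%N || (j' == n) then t else 0)
  else if (i' <= kk.+1)%N then (if (kk.+1 <= j')%N && (j' <= n.-1)%N then t else 0)
  else (if j' == n then t else 0).

Definition W (R : nzRingType) (s t : R) (n : nat) : 'M[R]_n :=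
  \matrix_(i < n, j < n) W_entry s t n i.+1 j.+1.

(* Main.v *)
Require Import Defs.
From HB Require Import structures.
From mathcomp Require Import all_boot all_order all_algebra.
From mathcomp Require Import reals.
From mathcomp Require Import zify ring lra.
Import Order.TTheory GRing.Theory Num.Theory.
Local Open Scope ring_scope.

Section Hess.
Variable R : comNzRingType.
Variable a : nat -> nat -> R.
Variable s : R.
Hypothesis a0 : forall p q, (q.+1 < p)%N -> a p q = 0.
Hypothesis as_ : forall q, a q.+1 q = s.

Definition Mx k : 'M[R]_k := \matrix_(i < k, j < k) a i j.

Lemma triang_part i k : (i <= k)%N ->
  \det (\matrix_(p < k, q < k) a (bump i p) q) = s ^+ (k - i) * \det (Mx i).
Proof.
elim: k => [|k IH] Hik.
  by move: Hik; rewrite leqn0 => /eqP ->; rewrite !det_mx00 expr0 mul1r.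
case: (ltngtP i k.+1) Hik => // [Hlt|->] _; last first.
  rewrite subnn expr0 mul1r /Mx; congr (\det _); apply/matrixP => p q.
  by rewrite !mxE /bump leqNgt (ltn_ord p).
rewrite (expand_det_row _ ord_max) big_ord_recr /= big1 ?add0r; last first.
  move=> j _; rewrite !mxE /bump.
  have -> : (i <= k)%N by [].
  rewrite a0 ?mul0r // add1n; have := ltn_ord j; rewrite /=; lia.
rewrite !mxE /bump.
have -> : (i <= k)%N by [].
rewrite add1n as_ /cofactor addnn -mul2n mulnC exprM sqrr_sign mul1r.
rewrite (_ : \det (row' _ _) = \det (\matrix_(p < k, q < k) a (bump i p) q)); last first.
  congr (\det _); apply/matrixP => p q; rewrite !mxE.
  by rewrite !lift_max.
by rewrite IH // subSn // exprS mulrA.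
Qed.

Lemma hess_rec k : \det (Mx k.+1) =
  \sum_(i < k.+1) (-s) ^+ (k - i) * a i k * \det (Mx i).
Proof.
rewrite (expand_det_col _ ord_max); apply: eq_bigr => i _.
have Hik : (i <= k)%N by rewrite -ltnS.
rewrite /cofactor.
rewrite (_ : \det (row' _ _) = \det (\matrix_(p < k, q < k) a (bump i p) q)); last first.
  by congr (\det _); apply/matrixP => p q; rewrite !mxE lift_max.
rewrite triang_part // mxE /=.
have -> : (-1) ^+ (i + k) = (-1) ^+ (k - i) :> R.
  move: (nat_of_ord i) Hik => j Hj.
  rewrite -signr_odd -[RHS]signr_odd -{1}(subnK Hj) addnC -addnA addnn.
  by rewrite oddD odd_double addbF.
rewrite -[(- s)]mulN1r exprMn; ring.
Qed.
End Hess.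
Arguments Mx {R} a k.

Section Main.
Variable R : realType.
Variables (s t : R) (n : nat).
Hypothesis Hn : (3 <= n)%N.
Let m := (n.-1)./2.
Definition aW i j := W_entry s t n i.+1 j.+1.

Lemma m_ge1 : (1 <= m)%N.
Proof. rewrite /m; case: n Hn => [|[|[|p]]] //. Qed.
Lemma m_lt : (m < n.-1)%N.
Proof.
rewrite /m; have := odd_double_half n.-1; have := Hn; move: (n.-1./2) => h.
move: (odd _) => b; case: b => /=; lia.
Qed.

Ltac went := rewrite /aW /W_entry -/m; repeat (case: ifP => /= ?); try done; lia.

Lemma E0 j : (j < m)%N -> aW 0 j = t.
Proof. have := m_lt; move=> *; went. Qed.
Lemma E1 i j : (1 <= i)%N -> (i <= j)%N -> (j < m)%N -> aW i j = 0.
Proof. have := m_lt; move=> *; went. Qed.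
Lemma E2 j : (m <= j)%N -> (j < n.-1)%N -> aW 0 j = 0.
Proof. have := m_lt; move=> *; went. Qed.
Lemma E3 i j : (1 <= i <= m)%N -> (m <= j)%N -> (j < n.-1)%N -> aW i j = t.
Proof. have := m_lt; move=> *; went. Qed.
Lemma E4 i j : (m < i)%N -> (i <= j)%N -> (j < n.-1)%N -> aW i j = 0.
Proof. have := m_lt; move=> *; went. Qed.
Lemma E5 : aW 0 n.-1 = t.
Proof. have := m_lt; move=> *; went. Qed.
Lemma E6 i : (1 <= i <= m)%N -> aW i n.-1 = 0.
Proof. have := m_lt; move=> *; went. Qed.
Lemma E7 i : (m < i)%N -> (i <= n.-1)%N -> aW i n.-1 = t.
Proof. have := m_lt; move=> *; went. Qed.

Definition g k := if k == 0%N then 1 else if (k <= m)%N then (-s) ^+ k.-1 * t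
  else m%:R * (-s) ^+ (k - 2) * t ^+ 2.

Lemma aH0 p q : (q.+1 < p)%N -> aW p q = 0.
Proof. move=> H; rewrite /aW /W_entry -/m; repeat (case: ifP => /= ?); try done; lia. Qed.
Lemma aHs q : aW q.+1 q = s.
Proof. by rewrite /aW /W_entry eqxx. Qed.

Lemma D_val k : (k < n)%N -> \det (Mx aW k) = g k.
Proof.
have Hm1 := m_ge1; have Hml := m_lt.
elim/ltn_ind: k => -[_ _|k IH Hk]; first by rewrite det_mx00.
rewrite (@hess_rec _ _ _ aH0 aHs) /g /=.
case: (ltnP k m) => Hkm.
  rewrite big_ord_recl /= subn0 E0 // det_mx00 mulr1 big1 ?addr0.
    by [].
  move=> i _; rewrite /bump /= add1n E1 ?mulr0 ?mul0r //=; have := ltn_ord i; lia.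
rewrite -(big_mkord xpredT (fun i => (-s) ^+ (k - i) * aW i k * \det (Mx aW i))).
rewrite big_ltn // (big_cat_nat _ (n := m.+1)) //=; try lia.
rewrite E2 //; try lia.
rewrite (eq_big_nat _ _ (F2 := fun _ => (-s) ^+ (k - 1) * t ^+ 2)); last first.
  move=> i /andP[H1 H2]; rewrite E3 //; try lia.
  rewrite IH; try lia. rewrite /g.
  have -> : (i == 0%N) = false by lia.
  have -> : (i <= m)%N by lia.
  rewrite (_ : (k - 1 = (k - i) + i.-1)%N); last by lia.
  rewrite exprD; ring.
rewrite (eq_big_nat _ _ (m := m.+1) (n := k.+1) (F2 := fun _ => 0)); last first.
  by move=> i /andP[H1 H2]; rewrite E4 ?mulr0 ?mul0r //; lia.
rewrite !sumr_const_nat mul0rn addr0 mulr0 mul0r add0r subn1 /= -mulr_natl.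
rewrite (_ : (k.+1 - 2 = k - 1)%N); last by lia.
rewrite subSS subn0 subn1 -mulr_natl; ring.
Qed.


Lemma final : \det (W s t n) = (-1) ^+ (n.-1) *
    (s ^+ (n.-1) * t + ((n./2 * m)%N)%:R * s ^+ (n - 3) * t ^+ 3).
Proof.
have Hm1 := m_ge1; have Hml := m_lt.
have -> : W s t n = Mx aW n by [].
have Hn1 : n = n.-1.+1 by lia.
have -> : \det (Mx aW n) = \det (Mx aW n.-1.+1) by rewrite -Hn1.
rewrite (@hess_rec _ _ _ aH0 aHs).
rewrite -(big_mkord xpredT (fun i => (-s) ^+ (n.-1 - i) * aW i n.-1 * \det (Mx aW i))).
rewrite big_ltn // (big_cat_nat _ (n := m.+1)) //=; try lia.
rewrite E5 det_mx00 subn0 mulr1.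
rewrite (eq_big_nat _ _ (m := 1%N) (n := m.+1) (F2 := fun _ => 0)); last first.
  by move=> i /andP[H1 H2]; rewrite E6 ?mulr0 ?mul0r //; lia.
rewrite (eq_big_nat _ _ (m := m.+1) (n := n.-1.+1)
   (F2 := fun _ => m%:R * (-s) ^+ (n.-1 - 2) * t ^+ 3)); last first.
  move=> i /andP[H1 H2]; rewrite E7 //; try lia.
  rewrite D_val; try lia. rewrite /g.
  have -> : (i == 0%N) = false by lia.
  have -> : (i <= m)%N = false by lia.
  rewrite (_ : (n.-1 - 2 = (n.-1 - i) + (i - 2))%N); last by lia.
  rewrite exprD; ring.
rewrite !sumr_const_nat mul0rn add0r.
have -> : (n.-1.+1 - m.+1)%N = n./2.
  rewrite /m; have := odd_double_half n.-1; have := uphalf_half n.-1.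
  rewrite uphalfE -Hn1; move: (n.-1./2) (n./2) => h1 h2.
  move: (odd _) => b; case: b => /=; lia.
have -> : (n - 3 = n.-1 - 2)%N by lia.
rewrite -mulr_natl natrM.
have : (2 <= n.-1)%N by lia.
move: (n.-1) => k Hk2; rewrite -(subnK Hk2); move: (k - 2)%N => j.
rewrite addn2 subn2 /= -[(- s)]mulN1r !exprMn !exprS -mulr_natr; ring.
Qed.
End Main.

Theorem proposition5p5 (R : realType) (s t : R) (n : nat) :
  (3 <= n)%N ->
  \det (W s t n) =
    (-1) ^+ (n.-1) *
    (s ^+ (n.-1) * t + ((n./2 * (n.-1)./2)%N)%:R * s ^+ (n - 3) * t ^+ 3).
Proof. move=> Hn; exact: final. Qed.
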